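(* For every $n\ge 9$, there is no permutation $\pi\in\mathfrak{S}_n$ that avoids $123$ and all of whose cycles have length $1$ or $3$; that is, $|\mathfrak{S}^{\{1,3\}}_n(123)|=0$.
   Context: $\mathfrak{S}^{\{1,3\}}_n(123)$ denotes the set of permutations of $[n]$ avoiding the pattern $123$ (no increasing subsequence of length 3 in the one-line notation) whose cycles all have length $1$ or $3$. *)

(* Defs.v *)
From mathcomp Require Import all_boot all_order all_fingroup.
Set Implicit Arguments. Unset Strict Implicit. Unset Printing Implicit Defensive.

(* pi avoids 123: no indices i < j < k with pi i < pi j < pi k (one-line notation,
   values compared as naturals). [n] is modelled as 'I_n = {0,...,n-1}. *)
Definition avoids123 (n : nat) (s : 'S_n) : bool :=
  [forall i : 'I_n, forall j : 'I_n, forall k : 'I_n,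
     ~~ [&& i < j, j < k, s i < s j & s j < s k]].

Definition cycles13 (n : nat) (s : 'S_n) : bool :=
  [forall x : 'I_n, (#|porbit s x| == 1) || (#|porbit s x| == 3)].

Definition S13_123 (n : nat) : {set 'S_n} :=
  [set s : 'S_n | avoids123 s && cycles13 s].

(* Main.v *)
Require Import Defs.
From mathcomp Require Import all_boot all_order all_fingroup.
Set Implicit Arguments. Unset Strict Implicit. Unset Printing Implicit Defensive.

Definition lrmin (n : nat) (s : 'S_n) (x : 'I_n) : bool :=
  [forall y : 'I_n, (y < x) ==> (s x < s y)].

Lemma dec_same (n : nat) (s : 'S_n) (x y : 'I_n) :
  avoids123 s -> lrmin s x = lrmin s y -> x < y -> s y < s x.
Proof.
move=> Hav Ht Hxy.
case Hx: (lrmin s x) Ht => Ht.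
  by move/forallP: (esym Ht) => /(_ x) /implyP; apply.
have /forallPn [z Hz] : ~~ lrmin s x by rewrite Hx.
rewrite negb_imply -leqNgt in Hz; case/andP: Hz => Hzx Hsz.
have Hzx' : s z < s x.
  rewrite ltn_neqAle Hsz andbT; apply/eqP => /val_inj /perm_inj Ezx.
  by rewrite Ezx ltnn in Hzx.
rewrite ltnNge leq_eqVlt negb_or; apply/andP; split.
  apply/eqP => /val_inj /perm_inj Exy; by rewrite Exy ltnn in Hxy.
apply/negP => Hsxy.
move/forallP: Hav => /(_ z) /forallP /(_ x) /forallP /(_ y).
by rewrite Hzx Hxy Hzx' Hsxy.
Qed.

Lemma cube_id (n : nat) (s : 'S_n) (x : 'I_n) :
  cycles13 s -> s (s (s x)) = x.
Proof.
move/forallP => /(_ x) /orP [] /eqP H; have := iter_porbit s x; rewrite H /=.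
  by move=> E; rewrite E E.
by [].
Qed.

Theorem proposition5p1 (n : nat) : 9 <= n -> #|S13_123 n| = 0.
Proof.
move=> Hn; apply/eqP; rewrite cards_eq0; apply/eqP/setP => s.
rewrite inE in_set0; apply/negP => /andP [Hav Hc].
pose f (x : 'I_n) := (lrmin s x, lrmin s (s x), lrmin s (s (s x))).
have Hf : injective f.
  have key : forall x y : 'I_n, f x = f y -> x < y -> False.
    move=> x y [E1 E2 E3] Hxy.
    have H1 := dec_same Hav E1 Hxy.
    have H2 := dec_same Hav (esym E2) H1.
    have H3 := dec_same Hav E3 H2.
    by rewrite !cube_id // in H3; move: (ltn_trans H3 Hxy); rewrite ltnn.
  move=> x y Exy; case: (ltngtP x y) => H.
  - by case: (key _ _ Exy H).
  - by case: (key _ _ (esym Exy) H).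
  - exact: val_inj.
have := leq_card f Hf; rewrite card_ord !card_prod card_bool /=.
by move=> H; move: (leq_trans Hn H).
Qed.
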